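(* Let $L\subseteq Q$ be a dense extension of Lie algebras with $Q$ multiplicatively semiprime. Then $A_0$ is a semiprime associative algebra.
   Context: Lie algebras over a commutative unital ring $\Phi$. $\mathrm{ad}_x(y)=[x,y]$; $A(Q)$ is the associative subalgebra of $\mathrm{End}_\Phi(Q)$ generated by all $\mathrm{ad}_x$, $x\in Q$; $M(Q)$ is the subalgebra generated by the identity and all $\mathrm{ad}_x$. $A_0=\{\mu\in A(Q):\mu(L)\subseteq L\}$. An extension $L\subseteq Q$ is dense if the only $\mu\in M(Q)$ with $\mu(L)=0$ is $\mu=0$. A Lie algebra $Q$ is semiprime if $[I,I]\ne0$ for every nonzero ideal $I$; $Q$ is multiplicatively semiprime if both $Q$ and the associative algebra $M(Q)$ are semiprime. *)

(* Defs.v *)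
From HB Require Import structures.
From mathcomp Require Import all_boot all_algebra.
Set Implicit Arguments. Unset Strict Implicit. Unset Printing Implicit Defensive.
Import GRing.Theory.
Local Open Scope ring_scope.

Definition is_lie (R : comPzRingType) (V : lmodType R) (br : V -> V -> V) : Prop :=
  (forall (a : R) (x y z : V), br (a *: x + y) z = a *: br x z + br y z) /\
  (forall (a : R) (x y z : V), br x (a *: y + z) = a *: br x y + br x z) /\
  (forall x : V, br x x = 0) /\
  (forall x y z : V, br x (br y z) + br y (br z x) + br z (br x y) = 0).

Definition submod (R : comPzRingType) (V : lmodType R) (S : V -> Prop) : Prop :=
  S 0 /\ (forall (a : R) (x y : V), S x -> S y -> S (a *: x + y)).

Definition lie_subalg (R : comPzRingType) (V : lmodType R) (br : V -> V -> V)
  (L : V -> Prop) : Prop :=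
  submod L /\ (forall x y, L x -> L y -> L (br x y)).

Definition lie_ideal (R : comPzRingType) (V : lmodType R) (br : V -> V -> V)
  (I : V -> Prop) : Prop :=
  submod I /\ (forall x y, I y -> I (br x y)).

(* Semiprime Lie algebra: [I,I] <> 0 for every nonzero ideal I
   ([I,I] is the span of the brackets, so it is nonzero iff some bracket is). *)
Definition lie_semiprime (R : comPzRingType) (V : lmodType R) (br : V -> V -> V) : Prop :=
  forall I : V -> Prop, lie_ideal br I -> (exists x, I x /\ x <> 0) ->
    exists x y, I x /\ I y /\ br x y <> 0.

Definition ad (R : comPzRingType) (V : lmodType R) (br : V -> V -> V) (x : V) : V -> V :=
  br x.

Inductive inA (R : comPzRingType) (V : lmodType R) (br : V -> V -> V) : (V -> V) -> Prop :=
  | inA_ad : forall x, inA br (ad br x)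
  | inA_zero : inA br (fun _ => 0)
  | inA_add : forall f g, inA br f -> inA br g -> inA br (fun v => f v + g v)
  | inA_scale : forall (a : R) f, inA br f -> inA br (fun v => a *: f v)
  | inA_comp : forall f g, inA br f -> inA br g -> inA br (fun v => f (g v)).

Inductive inM (R : comPzRingType) (V : lmodType R) (br : V -> V -> V) : (V -> V) -> Prop :=
  | inM_id : inM br (fun v => v)
  | inM_ad : forall x, inM br (ad br x)
  | inM_zero : inM br (fun _ => 0)
  | inM_add : forall f g, inM br f -> inM br g -> inM br (fun v => f v + g v)
  | inM_scale : forall (a : R) f, inM br f -> inM br (fun v => a *: f v)
  | inM_comp : forall f g, inM br f -> inM br g -> inM br (fun v => f (g v)).

Definition inA0 (R : comPzRingType) (V : lmodType R) (br : V -> V -> V)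
  (L : V -> Prop) (f : V -> V) : Prop :=
  inA br f /\ (forall v, L v -> L (f v)).

Definition alg_ideal (R : comPzRingType) (V : lmodType R)
  (S I : (V -> V) -> Prop) : Prop :=
  (forall f, I f -> S f) /\
  I (fun _ => 0) /\
  (forall (a : R) f g, I f -> I g -> I (fun v => a *: f v + g v)) /\
  (forall f g, S f -> I g -> I (fun v => f (g v))) /\
  (forall f g, I f -> S g -> I (fun v => f (g v))).

Definition alg_semiprime (R : comPzRingType) (V : lmodType R)
  (S : (V -> V) -> Prop) : Prop :=
  forall I : (V -> V) -> Prop, alg_ideal S I ->
    (exists f, I f /\ f <> (fun _ => 0)) ->
    exists f g, I f /\ I g /\ (fun v => f (g v)) <> (fun _ : V => 0).

Definition mult_semiprime (R : comPzRingType) (V : lmodType R) (br : V -> V -> V) : Prop :=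
  lie_semiprime br /\ alg_semiprime (inM br).

Definition dense_ext (R : comPzRingType) (V : lmodType R) (br : V -> V -> V)
  (L : V -> Prop) : Prop :=
  forall f, inM br f -> (forall v, L v -> f v = 0) -> f = (fun _ => 0).

(* Main.v *)
Require Import Defs.
From mathcomp Require Import all_boot all_algebra.
From Stdlib Require Import Classical FunctionalExtensionality.
Set Implicit Arguments. Unset Strict Implicit. Unset Printing Implicit Defensive.
Import GRing.Theory.
Local Open Scope ring_scope.

Definition linf (R : comPzRingType) (V : lmodType R) (f : V -> V) :=
  forall (a : R) x y, f (a *: x + y) = a *: f x + f y.

Section Aux.
Variables (R : comPzRingType) (V : lmodType R).

Lemma linf0 (f : V -> V) : linf f -> f 0 = 0.
Proof.
move=> H; have := H 1 0 0; rewrite !scale1r addr0 => e.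
by apply: (addrI (f 0)); rewrite addr0 -e.
Qed.

Lemma linfN (f : V -> V) x : linf f -> f (- x) = - f x.
Proof.
move=> H; have := H (-1) x 0; rewrite addr0 (linf0 H) addr0 !scaleN1r.
by [].
Qed.

Lemma linfD (f : V -> V) x y : linf f -> f (x + y) = f x + f y.
Proof. by move=> H; have := H 1 x y; rewrite !scale1r. Qed.

Lemma linfZ (f : V -> V) a x : linf f -> f (a *: x) = a *: f x.
Proof. by move=> H; have := H a x 0; rewrite !addr0 (linf0 H) addr0. Qed.

Lemma inM_lin (br : V -> V -> V) f : is_lie br -> inM br f -> linf f.
Proof.
move=> [_ [Hr _]]; elim; rewrite /linf.
- by [].
- by move=> x a y z; apply: Hr.
- by move=> a x y; rewrite scaler0 addr0.
- by move=> g h _ Hg _ Hh a x y; rewrite Hg Hh scalerDr addrACA.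
- by move=> b g _ Hg a x y; rewrite Hg scalerDr; congr (_ + _); rewrite !scalerA mulrC.
- by move=> g h _ Hg _ Hh a x y; rewrite Hh Hg.
Qed.

Lemma inA_inM (br : V -> V -> V) f : inA br f -> inM br f.
Proof.
elim.
- by move=> x; apply: inM_ad.
- exact: inM_zero.
- by move=> g h _ ? _ ?; apply: inM_add.
- by move=> a g _ ?; apply: inM_scale.
- by move=> g h _ ? _ ?; apply: inM_comp.
Qed.

Lemma br_anti (br : V -> V -> V) x y : is_lie br -> br x y = - br y x.
Proof.
move=> [Hl [Hr [Ha _]]].
have Dl : forall u w z, br (u + w) z = br u z + br w z.
  by move=> u w z; have := Hl 1 u w z; rewrite !scale1r.
have Dr : forall u w z, br z (u + w) = br z u + br z w.
  by move=> u w z; have := Hr 1 z u w; rewrite !scale1r.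
have := Ha (x + y); rewrite Dl !Dr !Ha add0r addr0 => /eqP.
by rewrite addr_eq0 => /eqP.
Qed.

End Aux.

Theorem mainTheorem15 (R : comPzRingType) (V : lmodType R) (br : V -> V -> V)
  (L : V -> Prop) :
  is_lie br -> lie_subalg br L -> dense_ext br L -> mult_semiprime br ->
  alg_semiprime (inA0 br L).
Proof.
move=> Hlie [HLs HLb] Hd [_ HMs] I HI [al [Ial alne]].
have [IS [I0 [IDZ [IlM IrM]]]] := HI.
apply: NNPP => Hno.
have II : forall f g, I f -> I g -> forall v, f (g v) = 0.
  move=> f g If Ig v.
  have : (fun v => f (g v)) = (fun _ => 0).
    by apply: NNPP => ne; apply: Hno; exists f, g.
  by move=> /(f_equal (fun h => h v)).
have IM : forall f, I f -> inM br f.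
  by move=> f /IS [/inA_inM].
have Ilin : forall f, I f -> linf f by move=> f /IM /(inM_lin Hlie).
pose Q m := forall a b, I a -> I b -> forall v, a (m (b v)) = 0.
have Qad : forall m x, inM br m -> Q m -> Q (fun v => m (br x v)).
  move=> m x Mm Qm a b Ia Ib.
  have mlin := inM_lin Hlie Mm.
  have Sa : forall v, L v -> forall z, a (m (br (b v) z)) = 0.
    move=> v Lv.
    have Mf : inM br (fun z => a (m (br (b v) z))).
      apply: (inM_comp (IM _ Ia)); apply: (inM_comp Mm); exact: (inM_ad br (b v)).
    have := Hd _ Mf; rewrite /= => H.
    move=> z0; suff /(f_equal (fun h => h z0)) : (fun z => a (m (br (b v) z))) = (fun _ => 0) by [].
    apply: H => z Lz.
    rewrite (br_anti _ _ Hlie) (linfN _ mlin) (linfN _ (Ilin _ Ia)).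
    have Ib' : I (fun u => ad br z (b u)).
      apply: IlM => //; split; first exact: inA_ad.
      by move=> u Lu; apply: HLb.
    by rewrite (Qm _ _ Ia Ib' v) oppr0.
  move=> v.
  have Mg : inM br (fun v => a (m (br x (b v)))).
    apply: (inM_comp (IM _ Ia)); apply: (inM_comp Mm).
    apply: (inM_comp (inM_ad br x)); exact: IM.
  have := Hd _ Mg; rewrite /= => H.
  suff /(f_equal (fun h => h v)) : (fun v => a (m (br x (b v)))) = (fun _ => 0) by [].
  apply: H => u Lu.
  have Lbu : L (b u) by have [_ ?] := IS _ Ib; auto.
  rewrite (br_anti _ _ Hlie) (linfN _ mlin) (linfN _ (Ilin _ Ia)).
  by rewrite (Sa _ Lu x) oppr0.
have Qall : forall lam, inM br lam -> forall m, inM br m -> Q m ->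
    Q (fun v => m (lam v)).
  move=> lam; elim => //.
  - by move=> x m Mm Qm; apply: Qad.
  - move=> m Mm Qm a b Ia Ib v.
    by rewrite (linf0 (inM_lin Hlie Mm)) (linf0 (Ilin _ Ia)).
  - move=> f g _ Hf _ Hg m Mm Qm a b Ia Ib v.
    by rewrite (linfD _ _ (inM_lin Hlie Mm)) (linfD _ _ (Ilin _ Ia))
       (Hf m Mm Qm a b Ia Ib v) (Hg m Mm Qm a b Ia Ib v) addr0.
  - move=> c f _ Hf m Mm Qm a b Ia Ib v.
    by rewrite (linfZ _ _ (inM_lin Hlie Mm)) (linfZ _ _ (Ilin _ Ia))
       (Hf m Mm Qm a b Ia Ib v) scaler0.
  - move=> f g Mf Hf _ Hg m Mm Qm.
    apply: (Hg (fun v => m (f v))); first exact: inM_comp.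
    exact: Hf.
have Qid : Q (fun v => v) by move=> a b Ia Ib v; exact: (II a b Ia Ib v).
have aMa : forall lam, inM br lam -> forall v, al (lam (al v)) = 0.
  by move=> lam Mlam v; exact: (Qall lam Mlam _ (inM_id br) Qid al al Ial Ial v).
pose K f := inM br f /\
  (forall h, inM br h -> (forall lam, inM br lam -> forall v, h (lam (al v)) = 0) ->
      forall lam, inM br lam -> forall v, h (lam (f v)) = 0) /\
  (forall h, inM br h -> (forall lam, inM br lam -> forall v, al (lam (h v)) = 0) ->
      forall lam, inM br lam -> forall v, f (lam (h v)) = 0).
have Mal := IM _ Ial.
have Kal : K al by split => //; split => // h Mh Hh lam Mlam v; apply: Hh.
have Kid : alg_ideal (inM br) K.
  split; first by move=> f [].
  split.
    split; first exact: inM_zero.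
    split=> h Mh Hh lam Mlam v //.
    by rewrite (linf0 (inM_lin Hlie (inM_comp Mh Mlam))).
  split.
    move=> c f g [Mf [Lf Rf]] [Mg [Lg Rg]]; split.
      by apply: inM_add => //; apply: inM_scale.
    split=> h Mh Hh lam Mlam v.
      have hl := inM_lin Hlie (inM_comp Mh Mlam).
      by rewrite /= hl (Lf h Mh Hh lam Mlam v) (Lg h Mh Hh lam Mlam v) scaler0 addr0.
    by rewrite (Rf h Mh Hh lam Mlam v) (Rg h Mh Hh lam Mlam v) scaler0 addr0.
  split.
    move=> mu f Mmu [Mf [Lf Rf]]; split; first exact: inM_comp.
    split=> h Mh Hh lam Mlam v.
      exact: (Lf h Mh Hh (fun v => lam (mu v)) (inM_comp Mlam Mmu)).
    by rewrite (Rf h Mh Hh lam Mlam v) (linf0 (inM_lin Hlie Mmu)).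
  move=> f mu [Mf [Lf Rf]] Mmu; split; first exact: inM_comp.
  split=> h Mh Hh lam Mlam v.
    exact: (Lf h Mh Hh lam Mlam (mu v)).
  exact: (Rf h Mh Hh (fun v => mu (lam v)) (inM_comp Mmu Mlam)).
have [f [g [[Mf [Lf Rf]] [[Mg [Lg Rg]] fg]]]] := HMs K Kid (ex_intro _ al (conj Kal alne)).
apply: fg; apply: functional_extensionality => v.
have aMg : forall lam, inM br lam -> forall v, al (lam (g v)) = 0.
  exact: (Lg al Mal aMa).
exact: (Rf g Mg aMg (fun v => v) (inM_id br) v).
Qed.
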